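(* Let $p$ be a prime number. The $p$-adic topology on $\mathbb{N}\setminus p\mathbb{N}$ coincides with the zero-dimensional reflection of the subspace topology on $\mathbb{N}\setminus p\mathbb{N}$ inherited from the Golomb space $\mathbb{N}_\tau$.
   Context: $\mathbb{N}=\{1,2,\dots\}$, $\mathbb{N}_0=\{0\}\cup\mathbb{N}$. The Golomb topology $\tau$ on $\mathbb{N}$ is generated by the base of all sets $a+b\mathbb{N}_0=\{a+bn:n\in\mathbb{N}_0\}$ with $a,b\in\mathbb{N}$ coprime, and $\mathbb{N}_\tau=(\mathbb{N},\tau)$. The $p$-adic topology on a subset of $\mathbb{N}$ is the topology induced from the $p$-adic topology on $\mathbb{Z}$ (base: sets $x+p^n\mathbb{Z}$, $x\in\mathbb{Z}$, $n\in\mathbb{N}$); on $\mathbb{N}$ it is generated by the sets $x+p^n\mathbb{N}_0$, $x,n\in\mathbb{N}$. The zero-dimensional reflection of a topological space $X$ is the set $X$ with the topology generated by the base consisting of all clopen subsets of $X$. *)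

(* Defs.v *)
From mathcomp Require Import all_boot all_algebra.
Set Implicit Arguments. Unset Strict Implicit. Unset Printing Implicit Defensive.

Definition subsetP (A B : nat -> Prop) : Prop := forall x, A x -> B x.

Definition arith_prog (a b : nat) : nat -> Prop := fun m => exists n, m = a + b * n.

(* Golomb topology on N = {1,2,...}: generated by the base of all a + b N_0
   with a, b in N (i.e. >= 1) coprime; open sets = unions of base sets. *)
Definition golomb_open (U : nat -> Prop) : Prop :=
  forall x, U x -> exists a b, [/\ 0 < a, 0 < b, coprime a b,
                                  arith_prog a b x & subsetP (arith_prog a b) U].

Definition subspace_open (T : (nat -> Prop) -> Prop) (X : nat -> Prop)
  (V : nat -> Prop) : Prop :=
  exists U, T U /\ forall x, V x <-> (U x /\ X x).

Definition clopen_in (X : nat -> Prop) (TX : (nat -> Prop) -> Prop)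
  (C : nat -> Prop) : Prop :=
  [/\ subsetP C X, TX C & TX (fun x => X x /\ ~ C x)].

(* Zero-dimensional reflection of (X, TX): topology generated by the base of
   all clopen subsets, i.e. open sets are the unions of clopen sets. *)
Definition zero_dim_reflection_open (X : nat -> Prop)
  (TX : (nat -> Prop) -> Prop) (W : nat -> Prop) : Prop :=
  forall x, W x -> exists C, [/\ clopen_in X TX C, C x & subsetP C W].

Definition padic_open_Z (p : nat) (U : int -> Prop) : Prop :=
  forall x, U x -> exists n, 0 < n /\
    forall y : int, (Posz (p ^ n)%N %| (y - x)%R)%Z -> U y.

Definition padic_open_sub (p : nat) (X : nat -> Prop) (W : nat -> Prop) : Prop :=
  exists U, padic_open_Z p U /\ forall m, W m <-> (U (Posz m) /\ X m).

Definition N_minus_pN (p : nat) : nat -> Prop := fun m => 0 < m /\ ~~ (p %| m).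

(* Main.v *)
Require Import Defs.
From Stdlib Require Import Classical.
From mathcomp Require Import all_boot all_order all_algebra zify ring lra.
Local Open Scope ring_scope.
Import Order.TTheory GRing.Theory Num.Theory.
Set Implicit Arguments. Unset Strict Implicit. Unset Printing Implicit Defensive.
Import Order.TTheory GRing.Theory Num.Theory.

Lemma ap_int (a b z : nat) : arith_prog a b z <-> exists n : nat, (z:int) = (a:int) + (b:int) * (n:int).
Proof.
split; first by move=> [n ->]; exists n.
by move=> [n]; rewrite -PoszM -PoszD => -[->]; exists n.
Qed.

Lemma meet (x y e c : nat) : (0 < e)%N -> (0 < c)%N ->
  (Posz (gcdn e c) %| Posz x - Posz y)%Z ->
  exists z, arith_prog x e z /\ arith_prog y c z.
Proof.
move=> e0 c0 /dvdzP [t ht].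
have [u [v huv]] := Bezoutz e c.
have hg : gcdz (Posz e) (Posz c) = Posz (gcdn e c) by [].
rewrite hg in huv.
have hx : Posz x = Posz y + t * (u * e + v * c) by rewrite huv -ht; ring.
set K : nat := (absz (u*t)%R + absz (v*t)%R)%N.
have h1 : u * t <= Posz (absz (u*t)) by rewrite abszE ler_norm.
have h2 : v * t <= Posz (absz (v*t)) by rewrite abszE ler_norm.
have hK : (K:int) <= (c:int) * K.
  by rewrite ler_peMl // ler1n.
have hK' : (K:int) <= (e:int) * K.
  by rewrite ler_peMl // ler1n.
have i0 : 0 <= (c:int) * K - u * t.
  rewrite subr_ge0; apply: le_trans hK; rewrite /K PoszD; lia.
have j0 : 0 <= v * t + (e:int) * K.
  have : (K:int) <= e * K := hK'.
  rewrite /K PoszD; lia.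
exists (x + e * absz ((c:int) * K - u * t)%R)%N; split.
  by exists (absz ((c:int) * K - u * t)%R).
apply/ap_int; exists (absz (v * t + (e:int) * K)%R).
rewrite PoszD PoszM !gez0_abs // hx; ring.
Qed.

Local Close Scope ring_scope.

Lemma modeq_dvdz (d x y : nat) : x = y %[mod d] -> (Posz d %| (Posz x - Posz y)%R)%Z.
Proof. by move=> h; rewrite -eqz_mod_dvd !modz_nat h. Qed.

Lemma golomb_res (b : nat) (S : nat -> Prop) : (1 < b)%N ->
  (forall y, S y -> coprime y b) ->
  (forall y z, (0 < z)%N -> y = z %[mod b] -> S y -> S z) -> golomb_open S.
Proof.
move=> b1 cop inv y Sy.
have ypos : (0 < y %% b)%N.
  rewrite lt0n; apply/negP => /eqP h; have := cop y Sy.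
  rewrite -coprime_modl h /coprime gcd0n => /eqP hb; rewrite hb in b1; done.
exists (y %% b)%N, b; split => //.
- exact: ltnW.
- by rewrite coprime_modl; apply: cop.
- by exists (y %/ b)%N; rewrite addnC mulnC -divn_eq.
- move=> z [k ->]; apply: (inv y) => //.
  + by rewrite addn_gt0 ypos.
  + by rewrite mulnC addnC modnMDl modn_mod.
Qed.

Lemma Xmod (p n y z : nat) : prime p -> (0 < n)%N -> y = z %[mod p ^ n] ->
  (p %| y) = (p %| z).
Proof.
move=> pp n0 e.
have h : (p %| p ^ n)%N by rewrite -{1}(expn1 p) dvdn_exp2l.
have : y = z %[mod p] by rewrite -(modn_dvdm y h) -(modn_dvdm z h) e.
by rewrite /dvdn => ->.
Qed.

Lemma Xcop (p y : nat) : prime p -> N_minus_pN p y -> coprime y p.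
Proof. by move=> pp [_ h]; rewrite coprime_sym prime_coprime. Qed.

Lemma openA (p : nat) (S : nat -> Prop) (m : nat) : prime p ->
  subspace_open golomb_open (N_minus_pN p) S -> S m ->
  exists b, [/\ (0 < b)%N, (p %| b)%N, coprime m b & forall z, arith_prog m b z -> S z].
Proof.
move=> pp [U [gU hS]] Sm.
have [Um Xm] := (hS m).1 Sm.
have [a [b0 [a0 b00 cab [k mk] sub]]] := gU m Um.
exists (p * b0)%N; split.
- by rewrite muln_gt0 prime_gt0.
- exact: dvdn_mulr.
- rewrite coprimeMr Xcop //= mk -coprime_modl addnC mulnC modnMDl coprime_modl //.
- move=> z [j ->]; apply (hS _).2; split.
  + apply: sub; exists (k + p * j)%N; rewrite mk; ring.
  + case: Xm => m0 nd; split; first by rewrite addn_gt0 m0.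
    by rewrite dvdn_addl // -mulnA dvdn_mulr.
Qed.

Lemma gcd_part (x e d c' : nat) : coprime x e -> (c' %| x)%N -> (gcdn e (c' * d) %| d)%N.
Proof.
move=> cxe c'x.
have cg : coprime (gcdn e (c' * d)) c'.
  apply: (coprime_dvdl (dvdn_gcdl _ _)); rewrite coprime_sym.
  exact: coprime_dvdl c'x cxe.
by rewrite -(Gauss_dvdr _ cg) dvdn_gcdr.
Qed.

Lemma dvdz_nat (a b : nat) : (Posz a %| Posz b)%Z = (a %| b). Proof. by []. Qed.

Lemma core (p : nat) (C : nat -> Prop) (m : nat) : prime p ->
  clopen_in (N_minus_pN p) (subspace_open golomb_open (N_minus_pN p)) C -> C m ->
  exists n, 0 < n /\ forall y, N_minus_pN p y ->
     (Posz (p ^ n) %| (Posz y - Posz m)%R)%Z -> C y.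
Proof.
move=> pp [CX Co Cc] Cm.
have [b [b0 pb cmb hb]] := openA pp Co Cm.
set n := logn p b.
have n0 : 0 < n by rewrite -pfactor_dvdn // expn1.
exists n; split => // y Xy dy.
apply: NNPP => nCy.
have [c [c0 pc cyc hc]] := openA pp Cc (conj Xy nCy).
set k := logn p c.
have [b' pb' hb'] := pfactor_coprime pp b0.
have [c' pc' hc'] := pfactor_coprime pp c0.
have cop : coprime (p ^ (n + k)) (b' * c').
  by rewrite coprime_pexpl ?addn_gt0 ?n0 // coprimeMr pb' pc'.
set x := chinese (p ^ (n + k)) (b' * c') y 0.
have xm1 : x = y %[mod p ^ (n + k)] := chinese_modl cop y 0.
have xm2 : x = 0 %[mod b' * c'] := chinese_modr cop y 0.
have nk0 : 0 < n + k by rewrite addn_gt0 n0.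
have pxy : (p %| x) = (p %| y) := Xmod pp nk0 xm1.
have Xx : N_minus_pN p x.
  case: Xy => _ py; split; last by rewrite pxy.
  rewrite lt0n; apply/negP => /eqP x0; move: pxy; rewrite x0 dvdn0 => h.
  by rewrite -h in py.
have bcx : b' * c' %| x by rewrite /dvdn xm2 mod0n.
have dxy : (Posz (p ^ (n + k)) %| (Posz x - Posz y)%R)%Z := modeq_dvdz xm1.
have dnk : (Posz (p ^ n) %| Posz (p ^ (n + k)))%Z by rewrite dvdz_nat dvdn_exp2l // leq_addr.
have dkk : (Posz (p ^ k) %| Posz (p ^ (n + k)))%Z by rewrite dvdz_nat dvdn_exp2l // leq_addl.
case: (classic (C x)) => [Cx|nCx].
  have [e [e0 _ cxe he]] := openA pp Co Cx.
  have g : (Posz (gcdn e c) %| (Posz x - Posz y)%R)%Z.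
    apply: dvdz_trans dxy; apply: dvdz_trans dkk; rewrite dvdz_nat hc'.
    apply: gcd_part cxe _; exact: dvdn_trans (dvdn_mull _ (dvdnn _)) bcx.
  have [z [z1 z2]] := meet e0 c0 g.
  by case: (hc z z2) => _; apply; apply: he.
have [e [e0 _ cxe he]] := openA pp Cc (conj Xx nCx).
have g : (Posz (gcdn e b) %| (Posz x - Posz m)%R)%Z.
  apply: (@dvdz_trans (Posz (p ^ n))).
    rewrite dvdz_nat hb'; apply: gcd_part cxe _; exact: dvdn_trans (dvdn_mulr _ (dvdnn _)) bcx.
  have -> : (Posz x - Posz m = (Posz x - Posz y) + (Posz y - Posz m))%R by rewrite addrA subrK.
  by apply: rpredD => //; apply: dvdz_trans dxy.
have [z [z1 z2]] := meet e0 b0 g.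
by case: (he z z1) => _; apply; apply: hb.
Qed.

Theorem lemma3p2 (p : nat) : prime p ->
  forall W : nat -> Prop,
    padic_open_sub p (N_minus_pN p) W <->
    zero_dim_reflection_open (N_minus_pN p)
      (subspace_open golomb_open (N_minus_pN p)) W.
Proof.
move=> pp W; split.
  move=> [U [oU hW]] x Wx.
  have [Ux Xx] := (hW x).1 Wx.
  have [n [n0 hn]] := oU _ Ux.
  have pn1 : 1 < p ^ n by rewrite -{1}(expn0 p) ltn_exp2l // prime_gt1.
  set C := fun y => N_minus_pN p y /\ y = x %[mod p ^ n].
  have XC : forall y z, 0 < z -> y = z %[mod p ^ n] -> N_minus_pN p y -> N_minus_pN p z.
    move=> y z z0 e [_ py]; split => //; by rewrite -(Xmod pp n0 e).
  exists C; split.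
  - split.
    + by move=> y [].
    + exists C; split; last by move=> y; split => [h|[]//]; split => //; case: h.
      apply: (golomb_res pn1).
        by move=> y [Xy _]; rewrite coprime_pexpr // Xcop.
      move=> y z z0 e [Xy eyx]; split; first exact: XC e Xy.
      by rewrite -e.
    + exists (fun y => N_minus_pN p y /\ ~ C y); split; last first.
        by move=> y; split => [h|[]//]; split => //; case: h.
      apply: (golomb_res pn1).
        by move=> y [Xy _]; rewrite coprime_pexpr // Xcop.
      move=> y z z0 e [Xy nCy]; split; first exact: XC e Xy.
      move=> [_ ezx]; apply: nCy; split => //; by rewrite e.
  - by split.
  - move=> y [Xy eyx]; apply (hW y).2; split => //; apply: hn; exact: modeq_dvdz.
move=> H.
exists (fun z : int => exists m n, [/\ W m, 0 < n,
  (forall k, N_minus_pN p k -> (Posz (p ^ n) %| (Posz k - Posz m)%R)%Z -> W k) &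
  (Posz (p ^ n) %| (z - Posz m)%R)%Z]).
split.
  move=> z [m [n [Wm n0 hk dz]]]; exists n; split => // y dy.
  exists m, n; split => //.
  have -> : (y - Posz m = (y - z) + (z - Posz m))%R by rewrite addrA subrK.
  exact: rpredD.
move=> m; split.
  move=> Wm; have [C [Ccl Cm CW]] := H m Wm.
  case: (Ccl) => CX _ _.
  have [n [n0 hn]] := core pp Ccl Cm.
  split; last exact: CX.
  exists m, n; split => //.
    by move=> k Xk dk; apply: CW; apply: hn.
  by rewrite GRing.subrr dvdz0.
by move=> [[m0 [n [Wm0 n0 hk dz]]] Xm]; apply: hk.
Qed.
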